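(* Let $C\subseteq\mathbb{F}_q^n$ be a linear code, $t\ge 1$ an integer, and $(A,B)$ a $2$-power $t$-error locating pair for $C$. Let $\mathbf{y}=\mathbf{c}+\mathbf{e}$ with $\mathbf{c}\in C$ and $\mathrm{w}(\mathbf{e})=t$, $I_{\mathbf{e}}=\mathrm{supp}(\mathbf{e})$, and let $M_1,M_2,M$ be as defined in the context. Run the following algorithm on input $(C,\mathbf{y},t,A,B)$: compute $M$; set $J=Z(M)$; with $H$ a full-rank parity-check matrix of $C$ and $H_J$ the submatrix of $H$ formed by the columns with index in $J$, if the linear system $H_J\mathbf{u}^T=H\mathbf{y}^T$ (unknown $\mathbf{u}\in\mathbb{F}_q^{|J|}$) has no nonzero solution, return failure; otherwise take a nonzero solution $\mathbf{u}$, let $\mathbf{e}'\in\mathbb{F}_q^n$ have $\mathbf{e}'_J=\mathbf{u}$ and $e'_i=0$ for $i\notin J$, and return $\mathbf{y}-\mathbf{e}'$. Then the algorithm returns $\mathbf{c}$ if and only if $A(I_{\mathbf{e}})=M$.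
   Context: All codes are $\mathbb{F}_q$-linear subspaces of $\mathbb{F}_q^n$. $\mathbf{u}*\mathbf{v}=(u_1v_1,\dots,u_nv_n)$, $\mathbf{u}^i=(u_1^i,\dots,u_n^i)$; $A*B$ is the span of all $\mathbf{a}*\mathbf{b}$; $\langle\mathbf{u},\mathbf{v}\rangle=\sum_iu_iv_i$ and $X^\perp$ is the dual. $\mathrm{w}$ Hamming weight, $\mathrm{d}$ minimum distance, $\mathrm{supp}(\mathbf{x})=\{i:x_i\ne0\}$. For $J=\{j_1<\dots<j_s\}\subseteq\{1,\dots,n\}$, $\mathbf{x}_J=(x_{j_1},\dots,x_{j_s})$; $A(J)=\{\mathbf{a}\in A:\mathbf{a}_J=\mathbf{0}\}\subseteq\mathbb{F}_q^n$; $Z(M)=\{i: a_i=0\ \forall\mathbf{a}\in M\}$. $M_1=\{\mathbf{a}\in A\mid \langle \mathbf{a}*\mathbf{y},\mathbf{b}\rangle=0\ \forall \mathbf{b}\in B\}$, $M_2=\{\mathbf{a}\in A\mid \langle \mathbf{a}*\mathbf{y}^2,\mathbf{v}\rangle=0\ \forall \mathbf{v}\in (B^{\perp}*C)^{\perp}\}$, $M=M_1\cap M_2$. A pair $(A,B)$ is a $2$-power $t$-error locating pair for $C$ if: (1) $A*B\subseteq C^\perp$; (2) $\dim A>t$; (3) $\mathrm{d}(A^\perp)>t$; (4) $\mathrm{d}(A)+\mathrm{d}(C)>n$; (5) $\dim B+\dim (B^\perp*C)^\perp\ge t$. *)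

(* Defs.v *)
(* Codes over F_q = finite field F, as F-subspaces
   ({vspace 'rV[F]_n}) of the row space 'rV[F]_n = F^n. *)
From HB Require Import structures.
From mathcomp Require Import all_boot all_order all_algebra.
Set Implicit Arguments. Unset Strict Implicit. Unset Printing Implicit Defensive.
Import GRing.Theory.
Local Open Scope ring_scope.

Section Codes.
Variables (F : finFieldType) (n : nat).
Local Notation vec := 'rV[F]_n.

Definition hprod (u v : vec) : vec := \row_i (u 0 i * v 0 i).
Definition vpow (u : vec) (k : nat) : vec := \row_i (u 0 i ^+ k).
Definition dotp (u v : vec) : F := \sum_i u 0 i * v 0 i.
Definition supp (x : vec) : {set 'I_n} := [set i | x 0 i != 0].
Definition wt (x : vec) : nat := #|supp x|.
(* minimum distance; convention: the zero code has distance n+1 *)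
Definition mindist (X : {vspace vec}) : nat :=
  \big[minn/n.+1]_(x : vec | (x \in X) && (x != 0)) wt x.
Definition dualc (X : {vspace vec}) : {vspace vec} :=
  <<[seq v <- enum {: vec} |
       [forall a : vec, (a \in X) ==> (dotp a v == 0%R)]]>>%VS.
Definition starc (X Y : {vspace vec}) : {vspace vec} :=
  <<[seq hprod x.1 x.2 | x <- enum {: (vec * vec)%type} & (x.1 \in X) && (x.2 \in Y)]>>%VS.
Definition shortc (A : {vspace vec}) (J : {set 'I_n}) : {set vec} :=
  [set a | (a \in A) && [forall j in J, a 0 j == 0]].
Definition Zset (M : {set vec}) : {set 'I_n} :=
  [set i | [forall a in M, a 0 i == 0]].

Definition M1 (A B : {vspace vec}) (y : vec) : {set vec} :=
  [set a | (a \in A) &&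
     [forall b : vec, (b \in B) ==> (dotp (hprod a y) b == 0%R)]].
Definition M2 (A B C : {vspace vec}) (y : vec) : {set vec} :=
  [set a | (a \in A) &&
     [forall v : vec, (v \in dualc (starc (dualc B) C)) ==>
                       (dotp (hprod a (vpow y 2)) v == 0%R)]].
Definition Mset (A B C : {vspace vec}) (y : vec) : {set vec} :=
  M1 A B y :&: M2 A B C y.

Definition two_power_ELP (C A B : {vspace vec}) (t : nat) : Prop :=
  [/\ (starc A B <= dualc C)%VS,
      (t < \dim A)%N,
      (t < mindist (dualc A))%N,
      (n < mindist A + mindist C)%N
    & (t <= \dim B + \dim (dualc (starc (dualc B) C)))%N].

(* H_J : columns of H with index in J (in increasing order) *)
Definition colsJ (r : nat) (H : 'M[F]_(r, n)) (J : {set 'I_n}) : 'M[F]_(r, #|J|) :=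
  \matrix_(i, k) H i (enum_val k).
Definition extendJ (J : {set 'I_n}) (u : 'rV[F]_#|J|) : vec :=
  \row_i \sum_(k : 'I_#|J| | enum_val k == i) u 0 k.

(* alg_run H A B C y out : "out" is a possible result of the algorithm on
   input (C, y, t, A, B) using parity-check matrix H; None = failure. *)
Definition alg_run (r : nat) (H : 'M[F]_(r, n)) (A B C : {vspace vec}) (y : vec)
    (out : option vec) : Prop :=
  let J := Zset (Mset A B C y) in
  match out with
  | None => forall u : 'rV[F]_#|J|, u != 0 -> colsJ H J *m u^T != H *m y^T
  | Some z => exists u : 'rV[F]_#|J|,
      [/\ u != 0, colsJ H J *m u^T = H *m y^T & z = y - extendJ u]
  end.

End Codes.

(* Main.v *)
Require Import Defs.
From HB Require Import structures.
From mathcomp Require Import all_boot all_order all_algebra.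
Import GRing.Theory.
Local Open Scope ring_scope.


Section Aux.
Set Implicit Arguments.
Unset Strict Implicit.
Variables (F : finFieldType) (n : nat).
Local Notation vec := 'rV[F]_n.

Lemma dotp_hprod (a c b : vec) : dotp (hprod a c) b = dotp c (hprod a b).
Proof. rewrite /dotp; apply: eq_bigr => i _; rewrite !mxE; by rewrite -mulrA mulrCA. Qed.

Lemma dotpC (a b : vec) : dotp a b = dotp b a.
Proof. rewrite /dotp; apply: eq_bigr => i _; by rewrite mulrC. Qed.

Lemma dotp_lin x (I : finType) (c : I -> F) (w : I -> vec) :
  dotp x (\sum_i c i *: w i) = \sum_i c i * dotp x (w i).
Proof.
rewrite /dotp.
under eq_bigr do rewrite summxE mulr_sumr.
rewrite exchange_big; apply: eq_bigr => i _; rewrite mulr_sumr.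
by apply: eq_bigr => j _; rewrite mxE mulrCA.
Qed.

Lemma dualcP (X : {vspace vec}) v :
  reflect (forall x, x \in X -> dotp x v = 0) (v \in dualc X).
Proof.
rewrite /dualc; set s := [seq _ <- _ | _].
apply: (iffP idP) => [Hv x Xx | H].
  have := @coord_span _ _ _ (in_tuple s) v Hv => ->.
  rewrite dotp_lin big1 // => i _.
  have : s`_i \in s by rewrite mem_nth.
  rewrite mem_filter => /andP [/forallP /(_ x) /implyP /(_ Xx) /eqP -> _].
  by rewrite mulr0.
apply: memv_span; rewrite mem_filter mem_enum ?memvf ?andbT.
apply/forallP => a; apply/implyP => /H ->; by rewrite eqxx.
Qed.

Lemma starc_mem (X Y : {vspace vec}) a b :
  a \in X -> b \in Y -> hprod a b \in starc X Y.
Proof.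
move=> Xa Yb; apply: memv_span; apply/mapP; exists (a, b) => //.
by rewrite mem_filter /= Xa Yb mem_enum memvf.
Qed.

Lemma bigminn_le (T : eqType) (s : seq T) (P : pred T) (G : T -> nat) m x :
  x \in s -> P x -> (\big[minn/m]_(i <- s | P i) G i <= G x)%N.
Proof.
elim: s => [//|y s IH]; rewrite in_cons big_cons => /orP [/eqP <- Px|xs Px].
  by rewrite Px geq_minl.
case: (P y); last exact: IH.
by rewrite (leq_trans (geq_minr _ _)) // IH.
Qed.

Lemma mindist_le (X : {vspace vec}) x : x \in X -> x != 0 -> (mindist X <= wt x)%N.
Proof.
move=> Xx nz; rewrite /mindist; apply: bigminn_le; first exact: mem_index_enum.
by rewrite Xx nz.
Qed.

Lemma exists_vanish (A : {vspace vec}) (S : {set 'I_n}) :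
  (#|S| < \dim A)%N -> exists2 a, a \in A & (a != 0) && [forall j in S, a 0 j == 0].
Proof.
move=> ltSA.
pose P : 'M[F]_(n, #|S|) := \matrix_(i, k) (i == enum_val k)%:R.
pose f := linfun (@mulmxr F 1 n #|S| P).
have := limg_ker_dim f A.
have : (\dim (f @: A) <= #|S|)%N.
  by rewrite (leq_trans (dimvS (subvf _))) // dimvf dim_matrix mul1r.
move=> le1 eq1.
have : (\dim (A :&: lker f) != 0)%N.
  apply/eqP => e0; move: eq1; rewrite e0 add0n => e1.
  by move: ltSA; rewrite -e1 ltnNge le1.
rewrite dimv_eq0 -vpick0 => nz.
have := memv_pick (A :&: lker f); rewrite memv_cap memv_ker lfunE /= => /andP [Aa /eqP fa].
exists (vpick (A :&: lker f)) => //; rewrite nz /=.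
apply/forallP => j; apply/implyP => Sj.
have := congr1 (fun m : 'rV_#|S| => m 0 (enum_rank_in Sj j)) fa.
rewrite !mxE (bigD1 j) //= mxE enum_rankK_in // eqxx mulr1 big1 ?addr0 => [->|]; first by [].
by move=> i /negbTE ne; rewrite mxE enum_rankK_in // ne mulr0.
Qed.

Lemma colsJ_ext r (H : 'M[F]_(r, n)) (J : {set 'I_n}) (u : 'rV[F]_#|J|) :
  colsJ H J *m u^T = H *m (extendJ u)^T.
Proof.
apply/matrixP => i j; rewrite !mxE.
rewrite (partition_big (fun k => enum_val k) xpredT) //=.
apply: eq_bigr => l _; rewrite !mxE mulr_sumr.
by apply: eq_bigr => k /eqP <-; rewrite !mxE (ord1 j).
Qed.

Lemma ext_out (J : {set 'I_n}) (u : 'rV[F]_#|J|) i : i \notin J -> extendJ u 0 i = 0.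
Proof.
move=> nJ; rewrite mxE big1 // => k /eqP ek.
by move: nJ; rewrite -ek enum_valP.
Qed.

Lemma ext_in (J : {set 'I_n}) (u : 'rV[F]_#|J|) i (Ji : i \in J) :
  extendJ u 0 i = u 0 (enum_rank_in Ji i).
Proof.
rewrite mxE (big_pred1 (enum_rank_in Ji i)) // => k.
apply/eqP/eqP => [ek|->]; first by rewrite -(enum_valK_in Ji k) ek.
by rewrite enum_rankK_in.
Qed.

End Aux.


Theorem theorem3p5 (F : finFieldType) (n : nat) (C A B : {vspace 'rV[F]_n})
    (t : nat) (c e : 'rV[F]_n) (r : nat) (H : 'M[F]_(r, n))
    (out : option 'rV[F]_n) :
  (1 <= t)%N ->
  two_power_ELP C A B t ->
  c \in C ->
  wt e = t ->
  row_free H ->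
  (forall x : 'rV[F]_n, (x \in C) = (H *m x^T == 0)) ->
  alg_run H A B C (c + e) out ->
  (out = Some c <-> shortc A (supp e) = Mset A B C (c + e)).
Proof.
move=> t1 [elp1 elp2 elp3 elp4 elp5] cC we rfH HC.
rewrite /alg_run.
set y := c + e; set M := Mset A B C y; set J := Zset M.
have subM : shortc A (supp e) \subset M.
  apply/subsetP => a; rewrite inE => /andP [Aa /forallP Ha].
  have hay : hprod a y = hprod a c.
    apply/rowP => i; rewrite !mxE mulrDr.
    case: (eqVneq (e 0 i) 0) => [->|nz]; first by rewrite mulr0 addr0.
    have := Ha i; rewrite inE nz /= => /eqP ->; by rewrite !mul0r ?addr0.
  have hay2 : hprod a (vpow y 2) = hprod (hprod a c) c.
    apply/rowP => i; rewrite !mxE.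
    case: (eqVneq (e 0 i) 0) => [->|nz]; first by rewrite addr0 expr2 mulrA.
    have := Ha i; rewrite inE nz /= => /eqP ->; by rewrite !mul0r ?addr0.
  have acB : hprod a c \in dualc B.
    apply/dualcP => b Bb; rewrite dotpC dotp_hprod.
    have := subvP elp1 _ (starc_mem Aa Bb).
    by move/dualcP => /(_ c cC).
  rewrite /M /Mset !inE Aa /=; apply/andP; split; apply/forallP => v; apply/implyP => Hv.
    by rewrite hay dotpC; apply/eqP; move/dualcP: acB => /(_ v Hv); rewrite dotpC.
  by rewrite hay2; apply/eqP; move/dualcP: Hv; apply; apply: starc_mem.
have key : forall x, x \in C -> (forall i, i \notin J -> x 0 i = 0) -> x = 0.
  move=> x Cx xJ; apply/eqP; apply/negP => /negP nz.
  have ltS : (#|supp e| < \dim A)%N by move: we; rewrite /wt => ->.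
  have [a Aa /andP [anz /forallP Ha]] := exists_vanish ltS.
  have aM : a \in M by apply: (subsetP subM); rewrite inE Aa; apply/forallP.
  have dis : supp a :&: supp x = set0.
    apply/setP => i; rewrite !inE; apply/negP => /andP [ai xi].
    have iJ : i \in J by apply/negPn/negP => /xJ; apply/eqP.
    move: iJ; rewrite /J inE => /forallP /(_ a) /implyP /(_ aM) /eqP ai0.
    by rewrite ai0 eqxx in ai.
  have := cardsUI (supp a) (supp x); rewrite dis cards0 addn0 => eqc.
  have le1 : (wt a + wt x <= n)%N.
    by rewrite /wt -eqc; apply: leq_trans (max_card _) _; rewrite card_ord.
  have := leq_add (mindist_le Aa anz) (mindist_le Cx nz).
  move=> le2; have := leq_trans le2 le1; by rewrite leqNgt elp4.
move=> run.
have Hc0 : H *m c^T = 0 by apply/eqP; rewrite -HC.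
split.
  move=> outc; move: run; rewrite outc => -[u [unz Hu Hz]].
  have eu : extendJ u = e.
    have : y - extendJ u - c = 0 by rewrite -Hz subrr.
    rewrite /y addrAC (addrC c e) addrK => /eqP; rewrite subr_eq0 => /eqP.
    by move=> ->.
  apply/eqP; rewrite eqEsubset subM /=; apply/subsetP => a aM; rewrite inE.
  have Aa : a \in A by move: aM; rewrite /M /Mset !inE => /andP [/andP [] ].
  rewrite Aa /=; apply/forallP => j; apply/implyP; rewrite inE => ej.
  have jJ : j \in J.
    apply/negPn/negP => /(ext_out u); rewrite eu => e0; by rewrite e0 eqxx in ej.
  by move: jJ; rewrite /J inE => /forallP /(_ a) /implyP /(_ aM).
move=> Meq.
have eJ : forall i, i \in supp e -> i \in J.
  move=> i ie; rewrite /J -Meq inE; apply/forallP => a; apply/implyP.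
  by rewrite inE => /andP [_ /forallP Ha]; exact: (implyP (Ha i) ie).
have Hy : H *m y^T = H *m e^T by rewrite /y linearD /= mulmxDr Hc0 add0r.
case: out run => [z|] run.
  move: run => [u [unz Hu ->]].
  have : e - extendJ u = 0.
    apply: key.
      by rewrite HC linearB /= mulmxBr -colsJ_ext Hu Hy subrr.
    move=> i iJ; have := ext_out u iJ; rewrite !mxE => ->; rewrite subr0.
    by apply/eqP; apply: contraNT iJ => ne; apply: eJ; rewrite inE.
  by move/eqP; rewrite subr_eq0 => /eqP <-; rewrite /y addrK.
exfalso.
have : (0 < #|supp e|)%N by rewrite -/(wt e) we.
case/card_gt0P => i ie.
pose u0 : 'rV[F]_#|J| := \row_k e 0 (enum_val k).
have eu0 : extendJ u0 = e.
  apply/rowP => j; case: (boolP (j \in J)) => jJ.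
    by rewrite (ext_in _ jJ) mxE enum_rankK_in.
  rewrite ext_out //; apply/esym/eqP; apply: contraNT jJ => ne; apply: eJ.
  by rewrite inE.
have u0nz : u0 != 0.
  apply/eqP => u00.
  have := congr1 (fun w : 'rV[F]_#|J| => w 0 (enum_rank_in (eJ i ie) i)) u00.
  rewrite !mxE enum_rankK_in ?eJ // => e0.
  by move: ie; rewrite inE e0 eqxx.
by move: (run u0 u0nz); rewrite colsJ_ext eu0 Hy eqxx.
Qed.
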